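(* Let $b\in\mathcal E_1$ with $b-1$ flat at $0$, let $\theta$ be the inverse germ of $t\mapsto t\,b(t)$, write $\theta(x)=x\,c(x)$, let $\sigma(x)=\theta(x)^4$ with iterates $\sigma^n$ ($\sigma^0=\mathrm{id}$), and let $S(x)=\sum_{n=0}^{\infty}4^{-n}\log c(\sigma^n(x))$ (which converges on a neighbourhood of $0$). Then there exists $\varepsilon>0$ such that for every integer $p\ge0$ for which $S$ is of class $C^p$ on $(-\varepsilon,\varepsilon)$, writing $T=S^{(p)}$ and $\alpha=(\sigma')^p$, one has $$\lim_{n\to\infty}\frac{1}{4^n}\,\alpha(x)\,\alpha(\sigma(x))\cdots\alpha(\sigma^{n-1}(x))\,T(\sigma^n(x))=0\quad\text{for all }|x|<\varepsilon .$$
   Context: $\mathcal E_1$ denotes the ring of smooth function germs at $0\in\mathbb R$. A germ is flat at $0$ if all its derivatives (including its value) vanish at $0$. $S^{(p)}$ denotes the $p$-th derivative of $S$. *)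

(* Defs.v *)
From Stdlib Require Import Reals Lra.
From Coquelicot Require Import Coquelicot.
Open Scope R_scope.

Definition smooth_on (f : R -> R) (r : R) : Prop :=
  forall (n : nat) (x : R), Rabs x < r -> ex_derive_n f n x.

Definition flat_at0 (f : R -> R) : Prop :=
  forall n : nat, Derive_n f n 0 = 0.

Definition Cp_on (f : R -> R) (p : nat) (e : R) : Prop :=
  (forall (k : nat) (x : R), (k <= p)%nat -> Rabs x < e -> ex_derive_n f k x) /\
  (forall x : R, Rabs x < e -> continuous (Derive_n f p) x).

Fixpoint orbit_prod (alpha sigma : R -> R) (n : nat) (x : R) : R :=
  match n with
  | O => 1
  | S m => orbit_prod alpha sigma m x * alpha (Nat.iter m sigma x)
  end.

(* Main.v *)
From Stdlib Require Import Reals Lra Lia ZArith FunctionalExtensionality.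
From Coquelicot Require Import Coquelicot.
Open Scope R_scope.
Require Import Defs.

Lemma cont_eps (f : R -> R) x : continuous f x ->
  forall e, 0 < e -> exists d, 0 < d /\ forall y, Rabs (y - x) < d -> Rabs (f y - f x) < e.
Proof.
  intros Hc e He.
  destruct (proj1 (filterlim_locally f (f x)) Hc (mkposreal e He)) as [d Hd].
  exists d; split; [apply cond_pos|]. intros y Hy. apply (Hd y). exact Hy.
Qed.

Lemma derive_bound (f : R -> R) x M d : 0 < d ->
  (forall h, 0 < h < d -> Rabs (f (x + h) - f x) <= M * h) -> Rabs (Derive f x) <= M.
Proof.
  intros Hd H.
  assert (Hev : eventually (fun n => 0 < / (INR n + 1) < d)).
  { destruct (archimed (/ d)) as [H1 _].
    assert (0 <= IZR (up (/ d))).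
    { apply Rle_trans with (/d). apply Rlt_le, Rinv_0_lt_compat; lra. lra. }
    exists (Z.to_nat (up (/ d))). intros n Hn.
    assert (Hn' : IZR (up (/d)) <= INR n).
    { rewrite <- (Z2Nat.id (up (/d))). rewrite <- INR_IZR_INZ. apply le_INR; lia.
      apply le_IZR. lra. }
    pose proof (pos_INR n).
    split. apply Rinv_0_lt_compat; lra.
    rewrite <- (Rinv_inv d). apply Rinv_lt_contravar.
    apply Rmult_lt_0_compat. apply Rinv_0_lt_compat; lra. lra. lra. }
  unfold Derive, Lim. simpl.
  set (q := fun n : nat => (f (x + (0 + / (INR n + 1))) - f x) / (0 + / (INR n + 1))).
  assert (Hq : eventually (fun n => - M <= q n <= M)).
  { destruct Hev as [N HN]. exists N. intros n Hn. specialize (HN n Hn).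
    unfold q. rewrite Rplus_0_l.
    specialize (H _ HN).
    apply Rabs_le_between. unfold Rdiv. rewrite Rabs_mult, Rabs_inv.
    rewrite (Rabs_pos_eq (/ (INR n + 1))) by lra.
    apply Rmult_le_reg_r with (/ (INR n + 1)). lra.
    rewrite Rmult_assoc, Rinv_l by lra. lra. }
  assert (H1 : Rbar_le (Lim_seq q) (Lim_seq (fun _ => M))).
  { apply Lim_seq_le_loc. destruct Hq as [N HN]. exists N. intros n Hn; apply HN; auto. }
  assert (H2 : Rbar_le (Lim_seq (fun _ => -M)) (Lim_seq q)).
  { apply Lim_seq_le_loc. destruct Hq as [N HN]. exists N. intros n Hn; apply HN; auto. }
  rewrite Lim_seq_const in H1, H2.
  fold q. destruct (Lim_seq q) as [l| |]; simpl in *; try contradiction.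
  apply Rabs_le; lra.
Qed.

Lemma lip_h (b : R -> R) (r d2 : R) :
  (forall t, Rabs t < r -> is_derive b t (Derive b t)) ->
  d2 <= r ->
  (forall t, Rabs t < d2 -> Rabs ((b t - 1) + t * Derive b t) <= 1/2) ->
  forall u v, Rabs u < d2 -> Rabs v < d2 ->
    Rabs (u * (b u - 1) - v * (b v - 1)) <= 1/2 * Rabs (u - v).
Proof.
  intros Hd Hr Hb u v Hu Hv.
  assert (Hin : forall t, Rmin v u <= t <= Rmax v u -> Rabs t < d2).
  { intros t Ht. unfold Rmin, Rmax in Ht.
    destruct (Rle_dec v u); apply Rabs_lt_between in Hu; apply Rabs_lt_between in Hv;
    apply Rabs_lt_between; lra. }
  destruct (MVT_gen (fun t => t * (b t - 1)) v u (fun t => (b t - 1) + t * Derive b t))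
    as [c [Hc Heq]].
  - intros t Ht. assert (Rabs t < d2) by (apply Hin; lra).
    assert (Rabs t < r) by lra; specialize (Hd t H0).
    auto_derive. exists (Derive b t); exact Hd. replace (Derive (fun x => b x) t) with (Derive b t) by reflexivity; ring.
  - intros t Ht. apply continuity_pt_filterlim.
    assert (Rabs t < d2) by (apply Hin; lra).
    assert (Rabs t < r) by lra; specialize (Hd t H0).
    apply (ex_derive_continuous (K:=R_AbsRing) (V:=R_NormedModule) (fun t => t * (b t - 1))). auto_derive. exists (Derive b t); exact Hd.
  - simpl in Heq. rewrite Heq, Rabs_mult.
    apply Rmult_le_compat_r. apply Rabs_pos. apply Hb, Hin, Hc.
Qed.

Lemma orbit_prod_bound (alpha sigma : R -> R) x :
  (forall k, Rabs (alpha (Nat.iter k sigma x)) <= 1) ->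
  forall n, Rabs (orbit_prod alpha sigma n x) <= 1.
Proof.
  intros H n; induction n; simpl.
  - rewrite Rabs_R1; lra.
  - rewrite Rabs_mult. rewrite <- (Rmult_1_l 1).
    apply Rmult_le_compat; try apply Rabs_pos; auto.
Qed.

Theorem lemma3p10
  (b theta c : R -> R) (r : R)
  (hr : 0 < r)
  (hb_smooth : smooth_on b r)
  (hb_flat : flat_at0 (fun t => b t - 1))
  (htheta_left : forall t, Rabs t < r -> theta (t * b t) = t)
  (htheta_right : forall x, Rabs x < r -> theta x * b (theta x) = x)
  (hc : forall x, Rabs x < r -> theta x = x * c x)
  (hc0 : continuous c 0) :
  let sigma := fun x => (theta x) ^ 4 in
  let S := fun x => Series (fun n => / 4 ^ n * ln (c (Nat.iter n sigma x))) in
  exists eps : R, 0 < eps /\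
    forall p : nat, Cp_on S p eps ->
      let T := Derive_n S p in
      let alpha := fun x => (Derive sigma x) ^ p in
      forall x : R, Rabs x < eps ->
        is_lim_seq
          (fun n => / 4 ^ n * orbit_prod alpha sigma n x * T (Nat.iter n sigma x))
          0.
Proof.
  intros sigma S.
  assert (b0 : b 0 = 1).
  { pose proof (hb_flat O) as H. simpl in H. lra. }
  assert (hbd : forall t, Rabs t < r -> is_derive b t (Derive b t)).
  { intros t Ht. apply Derive_correct. exact (hb_smooth 1%nat t Ht). }
  assert (hbc : continuous (Derive b) 0).
  { apply (ex_derive_continuous (K:=R_AbsRing) (V:=R_NormedModule) (Derive b)).
    exact (hb_smooth 2%nat 0 ltac:(rewrite Rabs_R0; lra)). }
  assert (hpc : continuous (fun t => (b t - 1) + t * Derive b t) 0).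
  { apply (continuous_plus (fun t => b t - 1) (fun t => t * Derive b t)).
    apply (continuous_minus b (fun _ => 1)).
    apply (ex_derive_continuous (K:=R_AbsRing) (V:=R_NormedModule) b).
    exact (hb_smooth 1%nat 0 ltac:(rewrite Rabs_R0; lra)).
    apply continuous_const.
    apply (continuous_mult (fun t => t) (Derive b)). apply continuous_id. exact hbc. }
  destruct (cont_eps _ _ hpc (1/2) ltac:(lra)) as [d2' [Hd2' Hp]].
  rewrite b0 in Hp.
  set (d2 := Rmin d2' r).
  assert (Hd2 : 0 < d2) by (apply Rmin_pos; lra).
  assert (Hd2r : d2 <= r) by apply Rmin_r.
  assert (Hhp : forall t, Rabs t < d2 -> Rabs ((b t - 1) + t * Derive b t) <= 1/2).
  { intros t Ht. assert (Rabs (t - 0) < d2').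
    { rewrite Rminus_0_r. eapply Rlt_le_trans. exact Ht. apply Rmin_l. }
    specialize (Hp t H). replace (1 - 1 + 0 * Derive b 0) with 0 in Hp by ring. rewrite Rminus_0_r in Hp.
    lra. }
  pose proof (lip_h b r d2 hbd Hd2r Hhp) as Hlip.
  destruct (cont_eps _ _ hc0 1 ltac:(lra)) as [d1 [Hd1 Hcb]].
  set (K := Rabs (c 0) + 1).
  assert (HK : 1 <= K) by (unfold K; pose proof (Rabs_pos (c 0)); lra).
  assert (HcK : forall x, Rabs x < d1 -> Rabs (c x) <= K).
  { intros x Hx. specialize (Hcb x ltac:(rewrite Rminus_0_r; exact Hx)).
    unfold K. pose proof (Rabs_triang_inv (c x) (c 0)). lra. }
  set (eps := Rmin (Rmin d1 r) (Rmin (d2 / (2 * K)) (1 / (4 * K)))).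
  assert (Heps : 0 < eps).
  { unfold eps. repeat apply Rmin_pos; try lra; apply Rdiv_lt_0_compat; lra. }
  assert (He1 : eps <= d1) by (unfold eps; eapply Rle_trans; apply Rmin_l).
  assert (He2 : eps <= r) by (unfold eps; eapply Rle_trans; [apply Rmin_l| apply Rmin_r]).
  assert (He3 : K * eps <= d2 / 2).
  { assert (eps <= d2 / (2 * K)) by (unfold eps; eapply Rle_trans; [apply Rmin_r| apply Rmin_l]).
    apply Rmult_le_compat_l with (r := K) in H; [|lra].
    replace (K * (d2 / (2 * K))) with (d2 / 2) in H by (field; lra). lra. }
  assert (He4 : K * eps <= 1 / 4).
  { assert (eps <= 1 / (4 * K)) by (unfold eps; eapply Rle_trans; [apply Rmin_r| apply Rmin_r]).
    apply Rmult_le_compat_l with (r := K) in H; [|lra].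
    replace (K * (1 / (4 * K))) with (1 / 4) in H by (field; lra). lra. }
  assert (Hth : forall x, Rabs x < eps -> Rabs (theta x) <= K * eps /\ Rabs (theta x) < d2).
  { intros x Hx. rewrite hc by lra. rewrite Rabs_mult.
    assert (Rabs (c x) <= K) by (apply HcK; lra).
    assert (Rabs x * Rabs (c x) <= K * eps).
    { rewrite Rmult_comm. apply Rmult_le_compat; try apply Rabs_pos; lra. }
    lra. }
  assert (Hthlip : forall x y, Rabs x < eps -> Rabs y < eps ->
     Rabs (theta x - theta y) <= 2 * Rabs (x - y)).
  { intros x y Hx Hy.
    destruct (Hth x Hx) as [_ Hu]. destruct (Hth y Hy) as [_ Hv].
    pose proof (Hlip _ _ Hu Hv) as Hl.
    assert (E : theta x - theta y = (x - y) - (theta x * (b (theta x) - 1) - theta y * (b (theta y) - 1))).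
    { rewrite <- (htheta_right x) at 2 by lra. rewrite <- (htheta_right y) at 2 by lra. ring. }
    set (D := theta x * (b (theta x) - 1) - theta y * (b (theta y) - 1)) in *.
    assert (Rabs (theta x - theta y) <= Rabs (x - y) + Rabs D).
    { rewrite E. replace (x - y - D) with ((x - y) + - D) by ring.
      eapply Rle_trans. apply Rabs_triang. rewrite Rabs_Ropp. lra. }
    lra. }
  assert (Hslip : forall x y, Rabs x < eps -> Rabs y < eps ->
     Rabs (sigma x - sigma y) <= 1/8 * Rabs (x - y)).
  { intros x y Hx Hy. unfold sigma.
    destruct (Hth x Hx) as [Hu _]. destruct (Hth y Hy) as [Hv _].
    pose proof (Hthlip x y Hx Hy) as Hl.
    set (u := theta x) in *. set (v := theta y) in *.
    replace (u ^ 4 - v ^ 4) with ((u - v) * ((u + v) * (u * u + v * v))) by ring.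
    rewrite Rabs_mult.
    assert (Rabs ((u + v) * (u * u + v * v)) <= 1 / 16).
    { rewrite Rabs_mult.
      apply Rabs_le_between in Hu. apply Rabs_le_between in Hv.
      assert (Rabs (u + v) <= 1/2) by (apply Rabs_le; lra).
      assert (Rabs (u * u + v * v) <= 1/8).
      { rewrite Rabs_pos_eq by nra. nra. }
      replace (1/16) with (1/2 * (1/8)) by field.
      apply Rmult_le_compat; try apply Rabs_pos; lra. }
    pose proof (Rabs_pos (u - v)).
    apply Rle_trans with (Rabs (u - v) * (1/16)).
    apply Rmult_le_compat_l; lra. lra. }
  assert (Hs0 : sigma 0 = 0).
  { unfold sigma. rewrite hc by (rewrite Rabs_R0; lra). ring. }
  assert (Hsig : forall x, Rabs x < eps -> Rabs (sigma x) <= 1/8 * Rabs x).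
  { intros x Hx. pose proof (Hslip x 0 Hx ltac:(rewrite Rabs_R0; lra)).
    rewrite Hs0, !Rminus_0_r in H. exact H. }
  assert (Hit : forall x n, Rabs x < eps -> Rabs (Nat.iter n sigma x) <= (1/8) ^ n * Rabs x).
  { intros x n Hx. induction n; simpl. lra.
    assert (Rabs (Nat.iter n sigma x) < eps).
    { eapply Rle_lt_trans. exact IHn. pose proof (Rabs_pos x).
      assert ((1/8)^n <= 1). { apply Rle_trans with (1 ^ n); [apply pow_incr; lra | rewrite pow1; lra]. }
      nra. }
    specialize (Hsig _ H). nra. }
  assert (HD : forall y, Rabs y < eps -> Rabs (Derive sigma y) <= 1).
  { intros y Hy. apply (derive_bound sigma y 1 (eps - Rabs y)). lra.
    intros h Hh. assert (Rabs (y + h) < eps).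
    { pose proof (Rabs_triang y h). rewrite (Rabs_pos_eq h) in H by lra. lra. }
    pose proof (Hslip _ _ H Hy). replace (y + h - y) with h in H0 by ring.
    rewrite (Rabs_pos_eq h) in H0 by lra. lra. }
  exists eps. split. exact Heps.
  intros p HCp T alpha x Hx.
  assert (Hitlim : is_lim_seq (fun n => Nat.iter n sigma x) 0).
  { apply is_lim_seq_le_le with (u := fun n => (1/8)^n * (- Rabs x)) (w := fun n => (1/8)^n * Rabs x).
    intros n. replace ((1/8)^n * - Rabs x) with (- ((1/8)^n * Rabs x)) by ring.
    apply Rabs_le_between. apply Hit; auto.
    replace (Finite 0) with (Finite (0 * - Rabs x)) by (f_equal; ring).
    apply is_lim_seq_mult'. apply is_lim_seq_geom. rewrite Rabs_pos_eq; lra. apply is_lim_seq_const.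
    replace (Finite 0) with (Finite (0 * Rabs x)) by (f_equal; ring).
    apply is_lim_seq_mult'. apply is_lim_seq_geom. rewrite Rabs_pos_eq; lra. apply is_lim_seq_const. }
  assert (HT : is_lim_seq (fun n => T (Nat.iter n sigma x)) (T 0)).
  { unfold is_lim_seq. eapply filterlim_comp. exact Hitlim.
    apply (proj2 HCp 0). rewrite Rabs_R0; lra. }
  assert (Hal : forall n, Rabs (orbit_prod alpha sigma n x) <= 1).
  { apply orbit_prod_bound. intros k. unfold alpha. rewrite <- RPow_abs.
    rewrite <- (pow1 p). apply pow_incr. split. apply Rabs_pos. apply HD.
    eapply Rle_lt_trans. apply Hit; auto. pose proof (Rabs_pos x).
    assert ((1/8)^k <= 1). { apply Rle_trans with (1 ^ k); [apply pow_incr; lra | rewrite pow1; lra]. }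
    nra. }
  assert (HU : is_lim_seq (fun n => / 4 ^ n * orbit_prod alpha sigma n x) 0).
  { apply is_lim_seq_le_le with (u := fun n => - (/4)^n) (w := fun n => (/4)^n).
    intros n. apply Rabs_le_between. rewrite Rabs_mult, pow_inv.
    rewrite (Rabs_pos_eq (/ 4 ^ n)). rewrite <- (Rmult_1_r (/ 4 ^ n)) at 2.
    apply Rmult_le_compat_l. apply Rlt_le, Rinv_0_lt_compat, pow_lt; lra. apply Hal.
    apply Rlt_le, Rinv_0_lt_compat, pow_lt; lra.
    replace (fun n => - (/4)^n) with (fun n => (-1) * (/4)^n) by (apply functional_extensionality; intro; ring).
    replace (Finite 0) with (Finite (-1 * 0)) by (f_equal; ring).
    apply is_lim_seq_mult'. apply is_lim_seq_const. apply is_lim_seq_geom. rewrite Rabs_pos_eq; lra.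
    apply is_lim_seq_geom. rewrite Rabs_pos_eq; lra. }
  replace 0 with (0 * T 0) by ring.
  apply is_lim_seq_mult'; assumption.
Qed.
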